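(* Let $a,b\in\mathbb{R}$ with $b\neq0$ and $|a|<1$, let $g\in L^\infty(\mathbb{R})$, and let $f\in L^\infty(\mathbb{R})$ be the solution of $f(x)-af(bx)=g(x)$ (i.e. $M_{a,b}f=g$, where $(M_{a,b}f)(x)=f(x)-af(bx)$). Then: (1) if $b>0$, then $f\in C([0,\infty))$ if and only if $g\in C([0,\infty))$; (2) if $b\ge1$, then $f\in C([1,\infty))$ if and only if $g\in C([1,\infty))$; (3) if $0<b\le1$, then $f\in C([0,1])$ if and only if $g\in C([0,1])$.
   Context: For $X\subseteq\mathbb{R}$, $C(X)$ is the space of bounded uniformly continuous real-valued functions on $X$; a function in $L^\infty(\mathbb{R})$ is said to lie in $C(X)$ if its restriction to $X$ agrees almost everywhere with an element of $C(X)$. *)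

(* Defs.v *)
From HB Require Import structures.
From mathcomp Require Import all_boot all_order all_algebra.
From mathcomp Require Import all_classical all_reals all_analysis.
Set Implicit Arguments. Unset Strict Implicit. Unset Printing Implicit Defensive.
Import Order.TTheory GRing.Theory Num.Theory.
Import numFieldNormedType.Exports.
Local Open Scope classical_set_scope.
Local Open Scope ring_scope.

Definition Linfty (R : realType) (f : R -> R) : Prop :=
  measurable_fun [set: R] f /\
  exists M : R, {ae (@lebesgue_measure R), forall x, `|f x| <= M}.

(* h is a bounded uniformly continuous real function on X (h in C(X)). *)
Definition BUC_on (R : realType) (X : set R) (h : R -> R) : Prop :=
  (exists M : R, forall x, X x -> `|h x| <= M) /\
  (forall e : R, 0 < e -> exists2 d : R, 0 < d &
     forall x y, X x -> X y -> `|x - y| < d -> `|h x - h y| < e).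

(* An L^oo function f "lies in C(X)": its restriction to X agrees a.e.
   with some element of C(X). *)
Definition in_C (R : realType) (X : set R) (f : R -> R) : Prop :=
  exists h : R -> R, BUC_on X h /\
    {ae (@lebesgue_measure R), forall x, X x -> f x = h x}.

Definition Mab (R : realType) (a b : R) (f : R -> R) : R -> R :=
  fun x => f x - a * f (b * x).

(* Main.v *)
Require Import Defs.
From HB Require Import structures.
From mathcomp Require Import all_boot all_order all_algebra.
From mathcomp Require Import ring.
From mathcomp Require Import all_classical all_reals all_analysis.
Import Order.TTheory GRing.Theory Num.Theory.
Import numFieldNormedType.Exports.
Local Open Scope classical_set_scope.
Local Open Scope ring_scope.

Set Implicit Arguments. Unset Strict Implicit.
Section S.
Context {R : realType}.
Local Notation mu := (@lebesgue_measure R).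

Lemma scale_null (c : R) (A : set R) : 0 < c -> measurable A -> mu A = 0%E ->
  mu ((fun x => c * x) @^-1` A) = 0%E.
Proof.
move=> c0 mA A0.
have := (@lebesgue_measure_unique R (mscale (NngNum (ltW c0)) (pushforward mu ( *%R c : R -> measurableTypeR R))) _ A mA).
move=> /(_ (@measurable_realfun.mulrl_measurable R setT c)).
rewrite A0 => H.
have : (mscale (NngNum (ltW c0)) (pushforward mu ( *%R c : R -> measurableTypeR R)) A = 0)%E.
  symmetry; apply: H.
  move=> _ [[u v] _ <-] /=.
  rewrite /mscale /pushforward /=.
  unfold pushforward.
  rewrite (_ : _ @^-1` _ = `]u / c, v / c]%classic); last first.
    apply/seteqP; split => x /=; rewrite !in_itv /=.
      by rewrite ltr_pdivrMr // ler_pdivlMr // ![x * c]mulrC.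
    by rewrite ltr_pdivrMr // ler_pdivlMr // ![x * c]mulrC.
  rewrite !lebesgue_measure_itv /= !lte_fin ltr_pM2r ?invr_gt0 //.
  case: ifP => _; last by rewrite mule0.
  by rewrite -EFinD -EFinM mulrBr !mulrA !(mulrC c) !mulfK ?gt_eqF.
move=> /(_ (@measurable_realfun.mulrl_measurable R setT c)).
rewrite /mscale /pushforward /= => /eqP; rewrite mule_eq0 eqe gt_eqF //= => /eqP //.
Qed.

Lemma ae_scale (c : R) (P : R -> Prop) : 0 < c ->
  {ae mu, forall x, P x} -> {ae mu, forall x, P (c * x)}.
Proof.
move=> c0 [N [mN N0 PN]].
exists ((fun x => c * x) @^-1` N); split.
- have := @measurable_realfun.mulrl_measurable R setT c measurableT N mN.
  by rewrite setTI.
- exact: scale_null.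
- by move=> x /= nP; apply: PN.
Qed.

Lemma ae_forall_nat (P : nat -> R -> Prop) :
  (forall n, {ae mu, forall x, P n x}) -> {ae mu, forall x, forall n, P n x}.
Proof.
move=> H.
apply: (@negligibleS _ _ _ mu (\bigcup_n ~` [set x | P n x])).
  move=> x /= nP.
  have [n nPn] : exists n, ~ P n x.
    by apply: contra_notP nP => H1 n; apply: contra_notP (H1) => /= nn; exists n.
  by exists n.
exact: negligible_bigcup.
Qed.

Lemma geo_small (q eps : R) : `|q| < 1 -> 0 < eps -> exists n, `|q| ^+ n < eps.
Proof.
move=> q1 e0; have := @cvgr0_norm_lt _ _ _ _ _ _ (cvg_expr q1) _ e0.
case=> N _ HN; exists N; rewrite -normrX; by apply: HN => /=.
Qed.

Definition UC (X : set R) (h : R -> R) := forall e : R, 0 < e -> exists2 d : R, 0 < d &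
     forall x y, X x -> X y -> `|x - y| < d -> `|h x - h y| < e.

Lemma UC_comb (X : set R) (h1 h2 : R -> R) (k : R) :
  UC X h1 -> UC X h2 -> UC X (fun x => h1 x + k * h2 x).
Proof.
move=> u1 u2 e e0.
have e20 : 0 < e / 2 by rewrite divr_gt0.
have k1 : 0 < `|k| + 1 by rewrite ltr_wpDl.
have [d1 d10 H1] := u1 _ e20.
have [d2 d20 H2] := u2 _ (divr_gt0 e20 k1).
exists (Num.min d1 d2); first by rewrite lt_min d10 d20.
move=> x y Xx Xy; rewrite lt_min => /andP[xy1 xy2].
have -> : h1 x + k * h2 x - (h1 y + k * h2 y) = (h1 x - h1 y) + k * (h2 x - h2 y).
  by rewrite mulrBr opprD addrACA.
apply: (le_lt_trans (ler_normD _ _)).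
rewrite (splitr e) ltrD ?H1 //.
rewrite normrM.
apply: (@le_lt_trans _ _ ((`|k| + 1) * `|h2 x - h2 y|)).
  by rewrite ler_wpM2r // lerDl.
by rewrite -ltr_pdivlMl // mulrC H2.
Qed.

Lemma UC_comp (X : set R) (h : R -> R) (c : R) : 0 < c ->
  (forall x, X x -> X (c * x)) -> UC X h -> UC X (fun x => h (c * x)).
Proof.
move=> c0 Xc u e e0.
have [d d0 H] := u _ e0.
exists (d / c); first by rewrite divr_gt0.
move=> x y Xx Xy xy; apply: H; try exact: Xc.
by rewrite -mulrBr normrM gtr0_norm // mulrC -ltr_pdivlMr.
Qed.

Lemma UC_0 (X : set R) : UC X (fun _ => 0).
Proof. by move=> e e0; exists 1 => // x y _ _ _; rewrite subrr normr0. Qed.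

Lemma dir1 (X : set R) (a b : R) (f g : R -> R) : 0 < b ->
  (forall x, X x -> X (b * x)) -> `|a| < 1 ->
  {ae mu, forall x, Mab a b f x = g x} -> in_C X f -> in_C X g.
Proof.
move=> b0 Xb a1 heq; rewrite /in_C /BUC_on => -[h [[[Mh hM] huc] hae]].
exists (fun x => h x + (- a) * h (b * x)); split; first split.
- exists (Mh + `|a| * Mh) => x Xx.
  apply: (le_trans (ler_normD _ _)); rewrite normrM normrN lerD ?hM //.
  by apply: ler_wpM2l => //; apply: hM; apply: Xb.
- by apply: (@UC_comb X h (fun x => h (b * x)) (- a) huc); apply: UC_comp.
have hae' := @ae_scale b _ b0 hae.
have FF : Filter (nbhs (almost_everywhere mu)) by exact: ae_filter_ringOfSetsType.
apply: (filterS3 FF _ heq hae hae') => x e1 e2 e3 Xx.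
by rewrite -e1 /Mab (e2 Xx) (e3 (Xb x Xx)) mulNr.
Qed.

Fixpoint Sn (a b : R) (h : R -> R) (n : nat) (x : R) : R :=
  if n is n'.+1 then Sn a b h n' x + a ^+ n' * h (b ^+ n' * x) else 0.

Lemma Xpow (X : set R) (b : R) : (forall x, X x -> X (b * x)) ->
  forall n x, X x -> X (b ^+ n * x).
Proof.
move=> Xb; elim=> [|n IH] x Xx; first by rewrite expr0 mul1r.
by rewrite exprS -mulrA; apply: Xb; apply: IH.
Qed.

Lemma Sn_UC (X : set R) (a b : R) (h : R -> R) : 0 < b ->
  (forall x, X x -> X (b * x)) -> UC X h -> forall n, UC X (Sn a b h n).
Proof.
move=> b0 Xb uh; elim=> [|n IH] /=; first exact: UC_0.
apply: (@UC_comb X (Sn a b h n) (fun x => h (b ^+ n * x)) (a ^+ n) IH).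
apply: UC_comp => //; first exact: exprn_gt0.
exact: Xpow.
Qed.

Lemma Sn_tail (X : set R) (a b : R) (h : R -> R) (M : R) x :
  (forall x, X x -> X (b * x)) -> `|a| < 1 -> (forall y, X y -> `|h y| <= M) -> X x ->
  forall n j, `|Sn a b h (n + j) x - Sn a b h n x| <=
     (`|a| ^+ n - `|a| ^+ (n + j)) * (M / (1 - `|a|)).
Proof.
move=> Xb a1 hM Xx n; elim=> [|j IH].
  by rewrite addn0 !subrr normr0 mul0r.
rewrite addnS /= addrAC.
apply: (le_trans (ler_normD _ _)).
have -> : (`|a| ^+ n - `|a| ^+ (n + j).+1) * (M / (1 - `|a|)) =
   (`|a| ^+ n - `|a| ^+ (n + j)) * (M / (1 - `|a|)) + `|a| ^+ (n + j) * M.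
  rewrite exprSr; field.
  by rewrite subr_eq0 eq_sym lt_eqF.
apply: lerD => //.
rewrite normrM normrX ler_wpM2l ?exprn_ge0 //.
apply: hM; exact: Xpow.
Qed.

Lemma Sn_bound (X : set R) (a b : R) (h : R -> R) (M : R) x :
  (forall x, X x -> X (b * x)) -> `|a| < 1 -> (forall y, X y -> `|h y| <= M) -> X x ->
  forall n m, (n <= m)%N -> `|Sn a b h m x - Sn a b h n x| <=
     `|a| ^+ n * (M / (1 - `|a|)).
Proof.
move=> Xb a1 hM Xx n m nm.
have M0 : 0 <= M by apply: le_trans (hM _ Xx).
have C0 : 0 <= M / (1 - `|a|) by rewrite divr_ge0 // subr_ge0 ltW.
rewrite -(subnKC nm).
apply: le_trans; first exact: (Sn_tail Xb a1 hM Xx n (m - n)).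
by rewrite ler_wpM2r // lerBlDr lerDl exprn_ge0.
Qed.

Lemma Sn_cvg (X : set R) (a b : R) (h : R -> R) (M : R) x :
  (forall x, X x -> X (b * x)) -> `|a| < 1 -> (forall y, X y -> `|h y| <= M) -> X x ->
  cvg (Sn a b h n x @[n --> \oo]).
Proof.
move=> Xb a1 hM Xx.
have M0 : 0 <= M by apply: le_trans (hM _ Xx).
set C := M / (1 - `|a|).
have C0 : 0 <= C by rewrite divr_ge0 // subr_ge0 ltW.
apply/cauchy_cvgP; apply/cauchyP => eps e0.
have C1 : 0 < C + 1 by rewrite ltr_wpDl.
have [n hn] := geo_small a1 (divr_gt0 e0 C1).
exists (Sn a b h n x); exists n => // m /= nm.
rewrite -ball_normE /ball_ /= distrC.
apply: (le_lt_trans (Sn_bound Xb a1 hM Xx nm)).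
apply: (@le_lt_trans _ _ (`|a| ^+ n * (C + 1))).
  by rewrite ler_wpM2l ?exprn_ge0 // lerDl.
by rewrite -ltr_pdivlMr.
Qed.

Definition Lf (a b : R) (h : R -> R) (x : R) := lim (Sn a b h n x @[n --> \oo]).

Lemma Lf_bound (X : set R) (a b : R) (h : R -> R) (M : R) x :
  (forall x, X x -> X (b * x)) -> `|a| < 1 -> (forall y, X y -> `|h y| <= M) -> X x ->
  forall n, `|Lf a b h x - Sn a b h n x| <= `|a| ^+ n * (M / (1 - `|a|)).
Proof.
move=> Xb a1 hM Xx n.
have cv := Sn_cvg Xb a1 hM Xx.
have cv2 : `|Sn a b h m x - Sn a b h n x| @[m --> \oo] --> `|Lf a b h x - Sn a b h n x|.
  apply: cvg_norm; apply: cvgB => //; exact: cvg_cst.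
apply: (cvgr_to_le cv2).
near=> m; apply: (Sn_bound Xb a1 hM Xx).
near: m; exact: nbhs_infty_ge.
Unshelve. all: by end_near. Qed.

Lemma dir2 (X : set R) (a b : R) (f g : R -> R) : 0 < b ->
  (forall x, X x -> X (b * x)) -> `|a| < 1 -> Linfty f ->
  {ae mu, forall x, Mab a b f x = g x} -> in_C X g -> in_C X f.
Proof.
move=> b0 Xb a1 [_ [Mf hMf]] heq; rewrite /in_C /BUC_on => -[h [[[Mh hM] huc] hae]].
have FF : Filter (nbhs (almost_everywhere mu)) by exact: ae_filter_ringOfSetsType.
set C := Mh / (1 - `|a|).
have q0 : 0 <= `|a| by [].
have tail := Lf_bound Xb a1 hM.
exists (Lf a b h); split; first split.
- exists C => x Xx; have := tail x Xx 0%N.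
  by rewrite /= subr0 expr0 mul1r.
- move=> e e0.
  have e30 : 0 < e / 3 by rewrite divr_gt0.
  have [Xe | nXe] := pselect (exists x, X x); last first.
    by exists 1 => // x y Xx; exfalso; apply: nXe; exists x.
  have [x0 Xx0] := Xe.
  have M0 : 0 <= Mh by apply: le_trans (hM _ Xx0).
  have C0 : 0 <= C by rewrite divr_ge0 // subr_ge0 ltW.
  have C1 : 0 < C + 1 by rewrite ltr_wpDl.
  have [n hn] := geo_small a1 (divr_gt0 e30 C1).
  have hn' : `|a| ^+ n * C < e / 3.
    apply: (@le_lt_trans _ _ (`|a| ^+ n * (C + 1))).
      by rewrite ler_wpM2l ?exprn_ge0 // lerDl.
    by rewrite -ltr_pdivlMr.
  have [d d0 hd] := Sn_UC a b0 Xb huc n e30.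
  exists d => // x y Xx Xy xy.
  have -> : Lf a b h x - Lf a b h y = (Lf a b h x - Sn a b h n x) +
     (Sn a b h n x - Sn a b h n y) - (Lf a b h y - Sn a b h n y).
    by rewrite addrA subrK opprB addrA subrK.
  apply: (le_lt_trans (ler_normB _ _)).
  have h1 := le_lt_trans (tail x Xx n) hn'.
  have h2 := hd x y Xx Xy xy.
  have h3 := le_lt_trans (tail y Xy n) hn'.
  apply: (le_lt_trans (lerD (ler_normD _ _) (lexx _))).
  have -> : e = e/3 + e/3 + e/3 by field.
  by rewrite !ltrD.
have hP : forall n, {ae mu, forall x, X x -> f x = Sn a b h n x + a ^+ n * f (b ^+ n * x)}.
  elim=> [|n IH].
    by apply: nearW => x Xx; rewrite /= add0r !expr0 !mul1r.
  have bn0 : 0 < b ^+ n by exact: exprn_gt0.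
  apply: (filterS3 FF _ IH (ae_scale bn0 heq) (ae_scale bn0 hae)) => x e1 e2 e3 Xx.
  have Xnx := Xpow Xb n Xx.
  rewrite (e1 Xx) /=.
  have -> : f (b ^+ n * x) = h (b ^+ n * x) + a * f (b ^+ n.+1 * x).
    rewrite -(e3 Xnx) -e2 /Mab exprS -mulrA.
    by rewrite subrK.
  by rewrite mulrDr addrA mulrA -exprSr.
have hQ : forall n, {ae mu, forall x, `|f (b ^+ n * x)| <= Mf}.
  move=> n; have bn0 : 0 < b ^+ n by exact: exprn_gt0.
  exact: (ae_scale bn0 hMf).
have hPQ := ae_forall_nat (fun n => filterS2 FF (fun x p q => conj p q) (hP n) (hQ n)).
apply: (@filterS _ _ FF _ _ _ hPQ) => x H Xx.
have Mf0 : 0 <= Mf by apply: le_trans (proj2 (H 0%N)).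
have M0 : 0 <= Mh by apply: le_trans (hM _ Xx).
have C0 : 0 <= C by rewrite divr_ge0 // subr_ge0 ltW.
have K0 : 0 < Mf + C + 1 by rewrite ltr_wpDl // addr_ge0.
have key : forall n, `|f x - Lf a b h x| <= `|a| ^+ n * (Mf + C).
  move=> n; have [e1 e2] := H n.
  have -> : f x - Lf a b h x = (f x - Sn a b h n x) - (Lf a b h x - Sn a b h n x).
    by rewrite opprB addrA subrK.
  apply: (le_trans (ler_normB _ _)); rewrite mulrDr lerD //; last exact: tail.
  by rewrite (e1 Xx) addrC addKr normrM normrX ler_wpM2l ?exprn_ge0.
case: (eqVneq (f x) (Lf a b h x)) => // ne.
have d0 : 0 < `|f x - Lf a b h x| by rewrite normr_gt0 subr_eq0.
have [n hn] := geo_small a1 (divr_gt0 d0 K0).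
have := key n.
have : `|a| ^+ n * (Mf + C) < `|f x - Lf a b h x|.
  apply: (@le_lt_trans _ _ (`|a| ^+ n * (Mf + C + 1))).
    by rewrite ler_wpM2l ?exprn_ge0 // lerDl.
  by rewrite -ltr_pdivlMr.
by move=> /lt_le_trans H1 /H1; rewrite ltxx.
Qed.
End S.
Unset Implicit Arguments. Set Strict Implicit.

Lemma main_equiv (R : realType) (X : set R) (a b : R) (f g : R -> R) : 0 < b ->
  (forall x, X x -> X (b * x)) -> `|a| < 1 -> Linfty f ->
  {ae (@lebesgue_measure R), forall x, Mab a b f x = g x} -> (in_C X f <-> in_C X g).
Proof.
move=> b0 Xb a1 Lf heq; split; [exact: (dir1 b0 Xb a1 heq) | exact: (dir2 b0 Xb a1 Lf heq)].
Qed.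

Theorem corollary3p7 (R : realType) (a b : R) (f g : R -> R) :
  b != 0 -> `|a| < 1 -> Linfty g -> Linfty f ->
  {ae (@lebesgue_measure R), forall x, Mab a b f x = g x} ->
  [/\ (0 < b -> (in_C `[0, +oo[ f <-> in_C `[0, +oo[ g)),
      (1 <= b -> (in_C `[1, +oo[ f <-> in_C `[1, +oo[ g)) &
      (0 < b <= 1 -> (in_C `[0, 1] f <-> in_C `[0, 1] g))].
Proof.
move=> _ a1 _ Lf heq; split.
- move=> b0; apply: (main_equiv _ _ a b f g b0 _ a1 Lf heq) => x /=.
  rewrite !in_itv /= !andbT => x0.
  exact: mulr_ge0 (ltW b0) x0.
- move=> b1; have b0 : 0 < b by apply: lt_le_trans b1.
  apply: (main_equiv _ _ a b f g b0 _ a1 Lf heq) => x /=.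
  rewrite !in_itv /= !andbT => x1.
  exact: mulr_ege1.
- move=> /andP[b0 b1]; apply: (main_equiv _ _ a b f g b0 _ a1 Lf heq) => x /=.
  rewrite !in_itv /= => /andP[x0 x1].
  by rewrite mulr_ge0 ?(ltW b0) // mulr_ile1 // ltW.
Qed.
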